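(* Let $(\vdash,\overline{\cdot},\widehat{\cdot})$ be a setting satisfying Pre-Relevance, let $\mathcal{S},\mathcal{S}'\subseteq\mathcal{L}$ with $\mathcal{S}\mid\mathcal{S}'$, let $\mathcal{E}_1$ be a complete extension of $\mathcal{AF}_{\vdash}(\mathcal{S})$, $\mathcal{E}_2$ a complete extension of $\mathcal{AF}_{\vdash}(\mathcal{S}')$, and $\mathcal{E}=\mathsf{Defended}(\mathcal{E}_1\cup\mathcal{E}_2,\mathcal{AF}_{\vdash}(\mathcal{S}\cup\mathcal{S}'))$. Then (1) $\mathcal{E}\cap\mathit{Arg}_{\vdash}(\mathcal{S})=\mathcal{E}_1$ and $\mathcal{E}\cap\mathit{Arg}_{\vdash}(\mathcal{S}')=\mathcal{E}_2$, and (2) $\mathcal{E}$ is a complete extension of $\mathcal{AF}_{\vdash}(\mathcal{S}\cup\mathcal{S}')$.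
   Context: $\mathcal{L}$ is the set of formulas of a language built from propositional atoms; $\mathsf{Atoms}(\mathcal{S})$ is the set of atoms occurring in $\mathcal{S}$, and $\mathcal{S}_1\mid\mathcal{S}_2$ means $\mathsf{Atoms}(\mathcal{S}_1)\cap\mathsf{Atoms}(\mathcal{S}_2)=\emptyset$. A setting is $(\vdash,\overline{\cdot},\widehat{\cdot})$ with ${\vdash}\subseteq\wp_{\sf fin}(\mathcal{L})\times\mathcal{L}$ arbitrary, $\overline{\cdot}:\mathcal{L}\to\wp(\mathcal{L})$, $\widehat{\cdot}$ assigning to each nonempty finite set a finite set of formulas, with $\widehat{\emptyset}=\emptyset$. $\mathit{Arg}_{\vdash}(\mathcal{S})=\{(\Gamma,\gamma):\Gamma\subseteq\mathcal{S}\text{ finite},\Gamma\vdash\gamma\}$; $\mathcal{AF}_{\vdash}(\mathcal{S})$ is the attack graph on it where $(\Gamma,\gamma)$ attacks $(\Gamma',\gamma')$ iff $\gamma\in\overline{\phi}$ for some $\phi\in\widehat{\Gamma'}$. $\mathcal{A}$ defends $a$ iff every attacker of $a$ in the framework is attacked by a member of $\mathcal{A}$; $\mathsf{Defended}(\mathcal{A},\mathcal{AF}_{\vdash}(\mathcal{S}))$ is the set of arguments of $\mathit{Arg}_{\vdash}(\mathcal{S})$ defended by $\mathcal{A}$. Complete = conflict-free, defends all its members, and contains every argument it defends. Pre-Relevance of the setting: (a) for all $\mathcal{S}_1,\mathcal{S}_2,\phi$ with $\mathcal{S}_1\cup\{\phi\}\mid\mathcal{S}_2$, $\mathcal{S}_1\cup\mathcal{S}_2\vdash\phi$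 implies $\mathcal{S}_1'\vdash\phi$ for some $\mathcal{S}_1'\subseteq\mathcal{S}_1$; (b) primeness: for all sets of atoms $\mathcal{A}_1\mid\mathcal{A}_2$, all finite $\mathcal{S}_1,\mathcal{T}_1,\mathcal{S}_2,\mathcal{T}_2$ with $\mathsf{Atoms}(\mathcal{S}_i),\mathsf{Atoms}(\mathcal{T}_i)\subseteq\mathcal{A}_i$, and all $\phi,\psi$ with $\psi\in\overline{\phi}$, $\phi\in\widehat{\mathcal{T}_1\cup\mathcal{T}_2}$: if $\mathcal{S}_1\cup\mathcal{S}_2\vdash\psi$ then there are $i\in\{1,2\}$, $\mathcal{S}_i'\subseteq\mathcal{S}_i$, $\phi_i\in\widehat{\mathcal{T}_i}$, $\psi_i\in\overline{\phi_i}$ with $\mathcal{S}_i'\vdash\psi_i$; (c) $\widehat{\Delta}\subseteq\widehat{\Delta\cup\Delta'}$ for all finite $\Delta,\Delta'$. *)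

(* Defs.v *)
From HB Require Import structures.
From mathcomp Require Import all_boot finmap.
Set Implicit Arguments. Unset Strict Implicit. Unset Printing Implicit Defensive.
Local Open Scope fset_scope.

Section Defs.
(* L : the formulas; Atom : the propositional atoms; Atoms phi a : atom a occurs in phi *)
Variables (L : choiceType) (Atom : Type) (Atoms : L -> Atom -> Prop).

Definition AtomsOf (S : L -> Prop) (a : Atom) : Prop := exists phi, S phi /\ Atoms phi a.

Definition indep (S1 S2 : L -> Prop) : Prop :=
  forall a, AtomsOf S1 a -> AtomsOf S2 a -> False.

Definition fs (G : {fset L}) : L -> Prop := fun x => x \in G.

(* A setting: der Γ γ  is  Γ ⊢ γ ;  bar phi psi  is  psi ∈ overline(phi) ;
   hat Γ  is  widehat(Γ). *)
Variables (der : {fset L} -> L -> Prop) (bar : L -> L -> Prop)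
          (hat : {fset L} -> {fset L}).

Definition PreRelevance : Prop :=
  (forall (S1 S2 : {fset L}) (phi : L),
      indep (fun x => x \in S1 \/ x = phi) (fs S2) ->
      der (S1 `|` S2) phi ->
      exists S1' : {fset L}, S1' `<=` S1 /\ der S1' phi) /\
  (forall (A1 A2 : Atom -> Prop), (forall a, A1 a -> A2 a -> False) ->
   forall (S1 T1 S2 T2 : {fset L}),
     (forall a, AtomsOf (fs S1) a -> A1 a) ->
     (forall a, AtomsOf (fs T1) a -> A1 a) ->
     (forall a, AtomsOf (fs S2) a -> A2 a) ->
     (forall a, AtomsOf (fs T2) a -> A2 a) ->
   forall phi psi : L, bar phi psi -> phi \in hat (T1 `|` T2) ->
     der (S1 `|` S2) psi ->
     (exists (S1' : {fset L}) (phi1 psi1 : L),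
         S1' `<=` S1 /\ phi1 \in hat T1 /\ bar phi1 psi1 /\ der S1' psi1) \/
     (exists (S2' : {fset L}) (phi2 psi2 : L),
         S2' `<=` S2 /\ phi2 \in hat T2 /\ bar phi2 psi2 /\ der S2' psi2)) /\
  (forall D D' : {fset L}, hat D `<=` hat (D `|` D')).

Definition argument := ({fset L} * L)%type.

Definition Arg (S : L -> Prop) (a : argument) : Prop :=
  (forall x, x \in a.1 -> S x) /\ der a.1 a.2.

Definition attacks (a b : argument) : Prop :=
  exists phi, phi \in hat b.1 /\ bar phi a.2.

Definition defends (S : L -> Prop) (A : argument -> Prop) (a : argument) : Prop :=
  forall b, Arg S b -> attacks b a -> exists c, A c /\ attacks c b.

Definition Defended (S : L -> Prop) (A : argument -> Prop) (a : argument) : Prop :=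
  Arg S a /\ defends S A a.

Definition conflict_free (E : argument -> Prop) : Prop :=
  forall a b, E a -> E b -> ~ attacks a b.

Definition complete (S : L -> Prop) (E : argument -> Prop) : Prop :=
  (forall a, E a -> Arg S a) /\
  conflict_free E /\
  (forall a, E a -> defends S E a) /\
  (forall a, Arg S a -> defends S E a -> E a).

End Defs.

(* Main.v *)
From Stdlib Require Import ClassicalEpsilon.
Require Import Defs.
From HB Require Import structures.
From mathcomp Require Import all_boot finmap.
Local Open Scope fset_scope.
Set Implicit Arguments. Unset Strict Implicit.

Lemma split_fset (L : choiceType) (P Q : L -> Prop) (G : {fset L}) :
  (forall x, x \in G -> P x \/ Q x) ->
  exists G1 G2 : {fset L}, G = G1 `|` G2 /\ (forall x, x \in G1 -> P x) /\
                           (forall x, x \in G2 -> Q x).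
Proof.
move=> H.
pose p := fun x => if excluded_middle_informative (P x) then true else false.
exists [fset x in G | p x], [fset x in G | ~~ p x]; split; [|split].
- apply/fsetP => x; rewrite in_fsetU !inE.
  by case: (x \in G) => //=; case: (p x).
- move=> x; rewrite !inE => /andP [_]; rewrite /p.
  by case: excluded_middle_informative.
- move=> x; rewrite !inE => /andP [xG]; rewrite /p.
  case: excluded_middle_informative => // nP _.
  by case: (H x xG).
Qed.

Lemma atoms_sub (L : choiceType) (Atom : Type) (Atoms : L -> Atom -> Prop)
  (S : L -> Prop) (G : {fset L}) :
  (forall x, x \in G -> S x) -> forall a, AtomsOf Atoms (fs G) a -> AtomsOf Atoms S a.
Proof. by move=> H a [phi [Hp Ha]]; exists phi; split => //; apply: H. Qed.

Lemma atoms0 (L : choiceType) (Atom : Type) (Atoms : L -> Atom -> Prop) {a} {P : Atom -> Prop} :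
  AtomsOf Atoms (fs (fset0 : {fset L})) a -> P a.
Proof. by move=> [phi [Hp _]]; rewrite /fs in_fset0 in Hp. Qed.

Lemma hat_sub (L : choiceType) (hat : {fset L} -> {fset L})
  (Hc : forall D D' : {fset L}, hat D `<=` hat (D `|` D')) (A B : {fset L}) phi :
  A `<=` B -> phi \in hat A -> phi \in hat B.
Proof.
move=> /fsetUidPr AB Hp.
have := Hc A B; rewrite AB => /fsubsetP; apply; exact Hp.
Qed.

Lemma prime_cross (L : choiceType) (Atom : Type) (Atoms : L -> Atom -> Prop)
  (der : {fset L} -> L -> Prop) (bar : L -> L -> Prop) (hat : {fset L} -> {fset L})
  (hat0 : hat fset0 = fset0)
  (HPR : PreRelevance Atoms der bar hat)
  (S S' : L -> Prop) (HSS' : indep Atoms S S') (c d : argument L) :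
  (forall x, x \in c.1 -> S x) -> (forall x, x \in d.1 -> S' x) ->
  der d.1 d.2 -> attacks bar hat d c ->
  exists psi, der fset0 psi /\ attacks bar hat (fset0, psi) c.
Proof.
case: HPR => [_ [Hb _]] Hc Hd Hder [phi [Hphi Hbar]].
have := Hb (AtomsOf Atoms S') (AtomsOf Atoms S) (fun a h1 h2 => HSS' a h2 h1)
  d.1 fset0 fset0 c.1 (atoms_sub Hd) (fun a h => atoms0 h) (fun a h => atoms0 h)
  (atoms_sub Hc) phi d.2 Hbar.
rewrite fset0U fsetU0 => /(_ Hphi Hder).
case=> [[S1' [phi1 [psi1 [_ [H _]]]]] | [S2' [phi2 [psi2 [Hs [Hp [Hb2 Hd2]]]]]]].
- by rewrite hat0 in_fset0 in H.
- exists psi2; split; last by exists phi2.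
  by move: Hs; rewrite fsubset0 => /eqP <-.
Qed.

Lemma unattacked_in (L : choiceType)
  (der : {fset L} -> L -> Prop) (bar : L -> L -> Prop) (hat : {fset L} -> {fset L})
  (hat0 : hat fset0 = fset0) S E1 psi :
  complete der bar hat S E1 -> der fset0 psi -> E1 (fset0, psi).
Proof.
move=> [_ [_ [_ H4]]] Hd; apply: H4.
- by split => //= x; rewrite in_fset0.
- by move=> b _ [phi [/=]]; rewrite hat0 in_fset0.
Qed.

Lemma cross_def (L : choiceType) (Atom : Type) (Atoms : L -> Atom -> Prop)
  (der : {fset L} -> L -> Prop) (bar : L -> L -> Prop) (hat : {fset L} -> {fset L})
  (hat0 : hat fset0 = fset0)
  (HPR : PreRelevance Atoms der bar hat)
  (S S' : L -> Prop) (HSS' : indep Atoms S S') E1 E2 x y :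
  complete der bar hat S E1 -> complete der bar hat S' E2 ->
  Arg der S x -> E2 y -> attacks bar hat y x ->
  exists z, E1 z /\ attacks bar hat z x.
Proof.
move=> HE1 HE2 [Hx _] Hy Hyx.
have [Hy1 Hy2] := HE2.1 y Hy.
have [psi [Hd Ha]] := prime_cross hat0 HPR HSS' Hx Hy1 Hy2 Hyx.
exists (fset0, psi); split; [exact (unattacked_in hat0 HE1 Hd) | exact Ha].
Qed.

Lemma cross_cf (L : choiceType) (Atom : Type) (Atoms : L -> Atom -> Prop)
  (der : {fset L} -> L -> Prop) (bar : L -> L -> Prop) (hat : {fset L} -> {fset L})
  (hat0 : hat fset0 = fset0)
  (HPR : PreRelevance Atoms der bar hat)
  (S S' : L -> Prop) (HSS' : indep Atoms S S') E1 E2 c d :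
  complete der bar hat S E1 -> complete der bar hat S' E2 ->
  E1 c -> E2 d -> attacks bar hat d c -> False.
Proof.
move=> HE1 HE2 Hc Hd Hdc.
have [z [Hz Hzc]] := cross_def hat0 HPR HSS' HE1 HE2 (HE1.1 c Hc) Hd Hdc.
exact: (HE1.2.1 z c Hz Hc Hzc).
Qed.

Lemma side (L : choiceType) (Atom : Type) (Atoms : L -> Atom -> Prop)
  (der : {fset L} -> L -> Prop) (bar : L -> L -> Prop) (hat : {fset L} -> {fset L})
  (hat0 : hat fset0 = fset0)
  (HPR : PreRelevance Atoms der bar hat)
  (S S' : L -> Prop) (HSS' : indep Atoms S S') E1 E2 SU U
  (HSU : forall x, SU x <-> S x \/ S' x)
  (HU : forall a, U a <-> E1 a \/ E2 a) :
  complete der bar hat S E1 -> complete der bar hat S' E2 ->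
  (forall a, E1 a -> Defended der bar hat SU U a) /\
  (forall a, Defended der bar hat SU U a -> Arg der S a -> E1 a) /\
  (forall c S1' psi, Defended der bar hat SU U c -> S1' `<=` c.1 ->
     (forall x, x \in S1' -> S x) -> der S1' psi -> E1 (S1', psi)).
Proof.
move=> HE1 HE2.
have Hc := HPR.2.2.
split; [|split].
- move=> a Ha.
  have [Ha1 Ha2] := HE1.1 a Ha.
  split; first by split => // x /Ha1 Sx; apply/HSU; left.
  move=> b [Hb1 Hb2] [phi [Hphi Hbar]].
  have [B1 [B2 [Eb [HB1 HB2]]]] := split_fset (fun x Hx => proj1 (HSU x) (Hb1 x Hx)).
  have := HPR.2.1 (AtomsOf Atoms S) (AtomsOf Atoms S') HSS'
    B1 a.1 B2 fset0 (atoms_sub HB1) (atoms_sub Ha1) (atoms_sub HB2)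
    (fun a h => atoms0 h) phi b.2 Hbar.
  rewrite fsetU0 -Eb => /(_ Hphi Hb2).
  case=> [[S1' [phi1 [psi1 [Hs [Hp [Hb' Hd]]]]]] | [S2' [phi2 [psi2 [_ [H _]]]]]];
    last by rewrite hat0 in_fset0 in H.
  have HS1'b : S1' `<=` b.1.
    by apply: fsubset_trans Hs _; rewrite Eb fsubsetUl.
  have HArg : Arg der S (S1', psi1).
    by split => //= x /(fsubsetP Hs) /HB1.
  have [c [Hc1 [phi' [Hphi' Hbar']]]] :=
    HE1.2.2.1 a Ha (S1', psi1) HArg (ex_intro _ phi1 (conj Hp Hb')).
  exists c; split; first by apply/HU; left.
  exists phi'; split => //; exact: hat_sub HS1'b Hphi'.
- move=> a [_ Hdef] HaS.
  apply: HE1.2.2.2 => // b Hb Hba.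
  have HbU : Arg der SU b.
    by case: Hb => Hb1 Hb2; split => // x /Hb1 Sx; apply/HSU; left.
  have [c [/HU [Hc1|Hc2] Hcb]] := Hdef b HbU Hba; first by exists c.
  exact (cross_def hat0 HPR HSS' HE1 HE2 Hb Hc2 Hcb).
- move=> c S1' psi [Hc' Hdef] Hs HS Hd.
  apply: HE1.2.2.2; first by split.
  move=> x Hx [phi' [Hphi' Hbar']].
  have HxU : Arg der SU x.
    by case: Hx => Hx1 Hx2; split => // y /Hx1 Sy; apply/HSU; left.
  have Hxc : attacks bar hat x c.
    by exists phi'; split => //; exact: hat_sub Hs Hphi'.
  have [y [/HU [Hy1|Hy2] Hyx]] := Hdef x HxU Hxc; first by exists y.
  exact (cross_def hat0 HPR HSS' HE1 HE2 Hx Hy2 Hyx).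
Qed.

Unset Implicit Arguments. Set Strict Implicit.

Theorem lemma6 (L : choiceType) (Atom : Type) (Atoms : L -> Atom -> Prop)
  (der : {fset L} -> L -> Prop) (bar : L -> L -> Prop) (hat : {fset L} -> {fset L})
  (hat0 : hat fset0 = fset0)
  (HPR : PreRelevance Atoms der bar hat)
  (S S' : L -> Prop) (HSS' : indep Atoms S S')
  (E1 E2 : argument L -> Prop)
  (HE1 : complete der bar hat S E1)
  (HE2 : complete der bar hat S' E2) :
  let SU := fun x => S x \/ S' x in
  let E := Defended der bar hat SU (fun a => E1 a \/ E2 a) in
  ((forall a, E a /\ Arg der S a <-> E1 a) /\
   (forall a, E a /\ Arg der S' a <-> E2 a)) /\
  complete der bar hat SU E.
Proof.
move=> SU E.
have HSS'' : indep Atoms S' S by move=> a h1 h2; exact: HSS' a h2 h1.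
have [A1 [B1 C1]] := @side _ _ _ _ _ _ hat0 HPR S S' HSS' E1 E2 SU
  (fun a => E1 a \/ E2 a) (fun x => iff_refl _) (fun a => iff_refl _) HE1 HE2.
have [A2 [B2 C2]] := @side _ _ _ _ _ _ hat0 HPR S' S HSS'' E2 E1 SU
  (fun a => E1 a \/ E2 a) (fun x => or_comm _ _) (fun a => or_comm _ _) HE2 HE1.
have UE : forall a, E1 a \/ E2 a -> E a by move=> a [/A1|/A2].
have UArg : forall a, E1 a \/ E2 a -> Arg der SU a.
  move=> a [Ha|Ha]; [have [H1 H2] := HE1.1 a Ha | have [H1 H2] := HE2.1 a Ha];
    split => // x Hx; [left|right]; auto.
split; [split|].
- move=> a; split; [by move=> [H1 H2]; apply: B1|].
  by move=> Ha; split; [apply: A1 | apply: HE1.1].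
- move=> a; split; [by move=> [H1 H2]; apply: B2|].
  by move=> Ha; split; [apply: A2 | apply: HE2.1].
split; [|split; [|split]].
- by move=> a [].
- move=> a b [Ha Hda] [Hb Hdb] Hab.
  have [c [Hc Hca]] := Hdb a Ha Hab.
  have [d [Hd Hdc]] := Hda c (UArg c Hc) Hca.
  case: Hc => Hc; case: Hd => Hd.
  + exact: (HE1.2.1 d c Hd Hc Hdc).
  + exact (cross_cf hat0 HPR HSS' HE1 HE2 Hc Hd Hdc).
  + exact (cross_cf hat0 HPR HSS'' HE2 HE1 Hc Hd Hdc).
  + exact: (HE2.2.1 d c Hd Hc Hdc).
- move=> a [Ha Hda] b Hb Hba.
  have [c [Hc Hcb]] := Hda b Hb Hba.
  by exists c; split => //; apply: UE.
- move=> a Ha Hdef; split => // b Hb Hba.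
  have [c [Hc [phi [Hphi Hbar]]]] := Hdef b Hb Hba.
  have Hc' := Hc.
  case: Hc' => [[Hc1 Hc2] _].
  case: Hb => Hb1 Hb2.
  have [B1' [B2' [Eb [HB1 HB2]]]] := split_fset (P := S) (Q := S') Hb1.
  have [C1' [C2' [Ec [HC1 HC2]]]] := split_fset (P := S) (Q := S') Hc1.
  have Hphi' : phi \in hat (B1' `|` B2') by rewrite -Eb.
  have := HPR.2.1 (AtomsOf Atoms S) (AtomsOf Atoms S') HSS'
    C1' B1' C2' B2' (atoms_sub HC1) (atoms_sub HB1) (atoms_sub HC2)
    (atoms_sub HB2) phi c.2 Hbar Hphi'.
  rewrite -Ec => /(_ Hc2).
  case=> [[S1' [phi1 [psi1 [Hs [Hp [Hb' Hd]]]]]] |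
          [S1' [phi1 [psi1 [Hs [Hp [Hb' Hd]]]]]]].
  + exists (S1', psi1); split; first by left; apply: (C1 c) => //;
      [apply: fsubset_trans Hs _; rewrite Ec fsubsetUl | by move=> x /(fsubsetP Hs) /HC1].
    exists phi1; split => //; apply: hat_sub Hp.
      exact: HPR.2.2. by rewrite Eb fsubsetUl.
  + exists (S1', psi1); split; first by right; apply: (C2 c) => //;
      [apply: fsubset_trans Hs _; rewrite Ec fsubsetUr | by move=> x /(fsubsetP Hs) /HC2].
    exists phi1; split => //; apply: hat_sub Hp.
      exact: HPR.2.2. by rewrite Eb fsubsetUr.
Qed.
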